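(* Let $h,w\ge 4$ and $G=K_w(U)\sqcap K_h$ where $U\subsetneq V(K_w)$ and $|U|=r$ (so $r\ne w$). Then $Z(G)\le wh-(h+r)$.
   Context: All graphs are finite, simple and undirected. Zero forcing: given a graph $G$ and a set $S\subseteq V(G)$ of initially filled vertices, the color change rule says that if a filled vertex $v$ has exactly one unfilled neighbor $u$, then $v$ forces $u$ to become filled. $S$ is a zero forcing set if repeatedly applying this rule eventually fills every vertex of $G$. The zero forcing number $Z(G)$ is the minimum cardinality of a zero forcing set of $G$. $K_n$ is the complete graph on vertex set $\{1,\dots,n\}$. Generalized hierarchical product: for graphs $W,H$ and $U\subseteq V(W)$ (the root set), $W(U)\sqcap H$ is the graph with vertex set $V(W)\times V(H)$ in which $(x_1,y_1)$ and $(x_2,y_2)$ are adjacent iff either ($x_1=x_2\in U$ and $y_1y_2\in E(H)$) or ($y_1=y_2$ and $x_1x_2\in E(W)$). *)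

(* Defs.v *)
From mathcomp Require Import all_boot.
Set Implicit Arguments. Unset Strict Implicit. Unset Printing Implicit Defensive.

Section ZeroForcing.
Variable T : finType.
Variable e : rel T.

Definition can_force (S : {set T}) (v u : T) : bool :=
  [&& v \in S, u \notin S, e v u &
      [forall x, (e v x && (x \notin S)) ==> (x == u)]].

Fixpoint zf_fill (n : nat) (S : {set T}) : bool :=
  if n is n'.+1 then
    (S == setT) || [exists v, exists u, can_force S v u && zf_fill n' (u |: S)]
  else S == setT.

(* each force fills a new vertex, so #|T| forces always suffice *)
Definition zero_forcing_set (S : {set T}) : bool := zf_fill #|T| S.

(* zero forcing number: minimum cardinality of a zero forcing set
   (V(G) itself is always one, of size #|T|) *)
Definition zero_forcing_number : nat :=
  \big[minn/#|T|]_(S : {set T} | zero_forcing_set S) #|S|.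
End ZeroForcing.

Definition complete_rel (n : nat) : rel 'I_n := fun x y => x != y.
Arguments complete_rel : clear implicits.

Definition hier_prod (TW TH : finType) (eW : rel TW) (U : {set TW}) (eH : rel TH)
  : rel (TW * TH) :=
  fun p q => ((p.1 == q.1) && (p.1 \in U) && eH p.2 q.2)
          || ((p.2 == q.2) && eW p.1 q.1).

(* Main.v *)
Require Import Defs.
From mathcomp Require Import all_boot zify.

Lemma bigmin_le (I : eqType) (r : seq I) (P : pred I) (x0 : nat) (G : I -> nat) j :
  j \in r -> P j -> \big[minn/x0]_(i <- r | P i) G i <= G j.
Proof.
move=> + Pj; elim: r => [|a r IH] //=; rewrite inE big_cons => /orP [/eqP <-|/IH H].
  by rewrite Pj; exact: geq_minl.
case: (P a) => //; exact: leq_trans (geq_minr _ _) H.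
Qed.

Lemma zfn_le (T : finType) (e : rel T) (S0 : {set T}) :
  zero_forcing_set e S0 -> zero_forcing_number e <= #|S0|.
Proof.
move=> H; rewrite /zero_forcing_number.
exact: bigmin_le (mem_index_enum S0) H.
Qed.

Lemma zf_fill_from (T : finType) (e : rel T) (S0 : {set T}) :
  (forall S : {set T}, S0 \subset S -> S != setT -> exists v u, can_force e S v u) ->
  forall k (S : {set T}), S0 \subset S -> #|~: S| <= k -> zf_fill e k S.
Proof.
move=> Hf; elim=> [|k IH] S sub.
  rewrite leqn0 => /eqP /cards0_eq H /=.
  by rewrite -(setCK S) H setC0.
move=> Hc /=; case: eqP => //= /eqP nT.
have [v [u Hvu]] := Hf S sub nT.
apply/existsP; exists v; apply/existsP; exists u; rewrite Hvu /=.
apply: IH; first exact: subset_trans sub (subsetUr _ _).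
move: Hvu => /and4P [_ uS _ _].
have := cardsC (u |: S); have := cardsC S; rewrite cardsU1 uS.
move: Hc; lia.
Qed.

Theorem mainTheorem10 (w h : nat) (U : {set 'I_w}) :
  4 <= w -> 4 <= h -> U \proper [set: 'I_w] ->
  zero_forcing_number (hier_prod (complete_rel w) U (complete_rel h))
    <= w * h - (h + #|U|).
Proof.
move=> hw hh HU.
case/properP: HU => _ [x0 _ x0U].
have [x1 x1x0] : exists x1 : 'I_w, x1 != x0.
  have lt : nat_of_bool (val x0 == 0) < w by case: (val x0 == 0); lia.
  exists (Ordinal lt); apply/eqP => /(congr1 val) /=.
  by case: eqP => [->|]; [|move=> H E; apply: H; rewrite -E].
have h0 : 0 < h by lia.
have h1 : 1 < h by lia.
pose y0 : 'I_h := Ordinal h0.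
pose yL : 'I_h := Ordinal h1.
have yLy0 : yL != y0 by [].
pose B := [set p : 'I_w * 'I_h | ((p.1 == x0) && (p.2 != yL)) || ((p.1 \in U) && (p.2 == y0)) || (p == (x1,yL))].
set e := hier_prod _ _ _.
have inB : forall a b, ((a, b) \in B) = ((a == x0) && (b != yL)) || ((a \in U) && (b == y0)) || ((a == x1) && (b == yL)).
  by move=> a b; rewrite inE /= xpair_eqE.
apply: (@leq_trans #|~: B|).
  apply: zfn_le.
  apply: (@zf_fill_from _ e (~: B)); last first.
  - exact: max_card.
  - exact: subxx.
  move=> S sub nT.
  have hB : forall p, p \notin S -> p \in B.
    move=> p; apply: contraR => H; apply: (subsetP sub); by rewrite in_setC.
  have eE : forall a b c d, e (a, b) (c, d) = ((a == c) && (a \in U) && (b != d)) || ((b == d) && (a != c)).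
    by [].
  have inS : forall p, p \notin B -> p \in S.
    by move=> p H; apply: (subsetP sub); rewrite in_setC.
  case: (boolP ((x1, yL) \in S)) => H1; last first.
    exists (x0, yL), (x1, yL); apply/and4P; split => //.
    - by apply: inS; rewrite inB !eqxx (negbTE x0U) [x0 == x1]eq_sym (negbTE x1x0).
    - by rewrite eE eqxx /= eq_sym x1x0 orbT.
    apply/forallP => -[a b]; apply/implyP => /andP [He Hn].
    move: (hB _ Hn); rewrite inB; move: He; rewrite eE (negbTE x0U) andbF /=.
    case/andP => /eqP <- _; rewrite eqxx (negbTE yLy0) /= !andbF /= andbT => /eqP -> //.
  have Hab : forall a b, (a, b) \notin S -> ((a == x1) && (b == yL)) = false.
    move=> a b Hn; apply/negbTE; apply/negP => /andP [/eqP Ea /eqP Eb].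
    by move: Hn; rewrite Ea Eb H1.
  case: (boolP [exists u, (u \in U) && ((u, y0) \notin S)]).
    case/existsP => u /andP [uU uS].
    have ux0 : (u == x0) = false.
      by apply/negbTE; apply: (contraNneq _ x0U) => <-.
    exists (u, yL), (u, y0); apply/and4P; split => //.
    - case: (eqVneq u x1) => [->//|ux1]; apply: inS.
      by rewrite inB ux0 (negbTE yLy0) (negbTE ux1) /= !andbF.
    - by rewrite eE eqxx uU yLy0.
    apply/forallP => -[a b]; apply/implyP => /andP [He Hn].
    move: (hB _ Hn); rewrite inB (Hab _ _ Hn) orbF.
    rewrite eE in He; case/orP: He.
      case/andP => /andP [/eqP <- _] bL.
      by rewrite ux0 /= => /andP [_ /eqP ->].
    case/andP => /eqP <- _.
    by rewrite eqxx (negbTE yLy0) !andbF.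
  move/existsPn => Hall.
  have Hall' : forall a b, a \in U -> b == y0 -> (a, b) \in S.
    move=> a b aU /eqP ->; move: (Hall a); by rewrite aU /= negbK.
  have [[a0 b0] Hz] : exists z, z \notin S.
    apply/existsP; move: nT; apply: contraR => /existsPn H.
    by apply/eqP/setP => z; rewrite inE; move: (H z); rewrite negbK.
  have : (a0 == x0) && (b0 != yL).
    move: (hB _ Hz); rewrite inB (Hab _ _ Hz) orbF.
    case/orP => // /andP [aU bE]; by move: Hz; rewrite Hall'.
  case/andP => /eqP Ea0 b0L; subst a0.
  exists (x1, b0), (x0, b0); apply/and4P; split => //.
  - case: (boolP ((x1 \in U) && (b0 == y0))) => [/andP [xU bE]|nn].
      exact: Hall'.
    apply: inS; rewrite inB (negbTE x1x0) (negbTE nn) /=.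
    by rewrite (negbTE b0L) andbF.
  - by rewrite eE eqxx x1x0 orbT.
  apply/forallP => -[a b]; apply/implyP => /andP [He Hn].
  have : (a == x0) && (b != yL).
    move: (hB _ Hn); rewrite inB (Hab _ _ Hn) orbF.
    case/orP => // /andP [aU bE]; by move: Hn; rewrite Hall'.
  case/andP => /eqP Ea _; subst a.
  rewrite eE in He; case/orP: He.
    by case/andP => /andP [/eqP E]; rewrite E eqxx in x1x0.
  by case/andP => /eqP <-.
pose C := [set (x0, y) | y in [set~ yL]].
pose R := [set (u, y0) | u in U].
have cC : #|C| = h.-1.
  by rewrite card_imset ?cardsC1 ?card_ord // => a b [].
have cR : #|R| = #|U|.
  by rewrite card_imset // => a b [].
have disj : [disjoint C & R].
  rewrite -setI_eq0; apply/eqP/setP => p; rewrite inE in_set0.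
  apply/negP => /andP [/imsetP [y _ ->] /imsetP [u uU [E _]]].
  by move: x0U; rewrite E uU.
have nin : (x1, yL) \notin C :|: R.
  rewrite in_setU; apply/norP; split; apply/negP.
    by case/imsetP => y _ /eqP; rewrite xpair_eqE (negbTE x1x0).
  by case/imsetP => u _ /eqP; rewrite xpair_eqE (negbTE yLy0) andbF.
have cU : #|(x1, yL) |: (C :|: R)| = h + #|U|.
  rewrite cardsU1 nin.
  have -> : #|C :|: R| = #|C| + #|R| by apply/eqP; rewrite (leq_card_setU C R).2.
  rewrite cC cR; lia.
have sB : (x1, yL) |: (C :|: R) \subset B.
  apply/subsetP => p; rewrite in_setU1 in_setU.
  case/orP => [/eqP ->|/orP [/imsetP [y yy ->]|/imsetP [u uU ->]]].
  - by rewrite inB !eqxx !andbT orbT.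
  - by rewrite inB eqxx /=; rewrite in_setC1 in yy; rewrite yy.
  - by rewrite inB uU eqxx orbT.
have := subset_leq_card sB; rewrite cU => le.
have := cardsC B; rewrite card_prod !card_ord.
lia.
Qed.
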